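(* Let $d$ be a positive even integer and $s$ a positive integer with $2s\leqslant d$. Then the union $\bigcup_{\varepsilon\in I^s}C_\varepsilon\subseteq\{0,1,*\}^d$ is a $(d-s)$-neighborly code, i.e. $\mathrm{dist}(u,v)\leqslant d-s$ for all $u,v$ in this union.
   Context: Strings over $\{0,1,*\}$ ($*$ is a ''joker''); for $u,v\in\{0,1,*\}^n$, $\mathrm{dist}(u,v)$ is the number of positions $i$ with $u_i\neq v_i$ and $u_i,v_i\in\{0,1\}$. A set $A\subseteq\{0,1,*\}^n$ is a $k$-neighborly code if $\max_{u,v\in A}\mathrm{dist}(u,v)\leqslant k$. Concatenation identifies $(x,y)$ with the string $xy$. Let $I=\{0,1\}$, $|x|=\sum_i x_i$ for binary $x$. Let $*^0=\{*\}$, $*^1=I$, and for $\varepsilon\in I^s$, $*^\varepsilon=*^{\varepsilon_1}\times\cdots\times *^{\varepsilon_s}$. Let $\alpha=(0,\ldots,0)$, $\omega=(1,\ldots,1)\in I^s$. For $\varepsilon\in I^s\setminus\{\alpha,\omega\}$ let $i=t(\varepsilon)$ be the unique index with $\varepsilon_i\neq\varepsilon_{i+1}=\cdots=\varepsilon_s$, and $A_\varepsilon=\{\varepsilon_1\}\times\cdots\times\{\varepsilon_i\}\times I^{s-1-i}\subseteq I^{s-1}$. Define subsets of $I^{d-s}$: $X_0=\{x\colon |x|\leqslant \frac d2-s\}$; $X_k=\{x\colon |x|=\frac d2-s+k\}$ for $0<k<s$; $X_s=\{x\colon |x|\geqslant \frac d2\}$. For $\varepsilon\in I^s\setminus\{\alpha,\omega\}$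 set $B_\varepsilon=X_{|\varepsilon|}\cap(I^{d-2s+1}\times A_\varepsilon)$, where $I^{d-s}=I^{d-2s+1}\times I^{s-1}$; set $B_\alpha=X_0$, $B_\omega=X_s$. Finally $C_\varepsilon=B_\varepsilon\times *^\varepsilon\subseteq\{0,1,*\}^d$ for $\varepsilon\in I^s$. *)

(* Defs.v *)
(* Strings over {0,1,*} are sequences of [option bool]:
   [Some false] = 0, [Some true] = 1, [None] = the joker *. *)
From mathcomp Require Import all_boot.
Set Implicit Arguments. Unset Strict Implicit. Unset Printing Implicit Defensive.

Definition jstring := seq (option bool).

Definition jdist (u v : jstring) : nat :=
  count (fun p : option bool * option bool =>
           match p with (Some a, Some b) => a != b | _ => false end) (zip u v).

Definition neighborly (k : nat) (A : jstring -> Prop) : Prop :=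
  forall u v, A u -> A v -> jdist u v <= k.

Definition weight (x : seq bool) : nat := count id x.

Definition in_starpow (eps : seq bool) (y : jstring) : bool :=
  all2 (fun (e : bool) (c : option bool) => if e then c != None else c == None) eps y.

(* i = t(eps) (1-based): eps_i <> eps_{i+1} = ... = eps_s, with 1 <= i < s *)
Definition is_t (eps : seq bool) (i : nat) : Prop :=
  [/\ 1 <= i < size eps,
      nth false eps i.-1 != nth false eps i &
      forall j, i <= j < size eps -> nth false eps j = nth false eps (size eps).-1].

Definition in_A (eps : seq bool) (z : seq bool) : Prop :=
  size z = (size eps).-1 /\
  exists i, is_t eps i /\ forall j, j < i -> nth false z j = nth false eps j.

Definition in_X (d s k : nat) (x : seq bool) : Prop :=
  size x = d - s /\
  (if k == 0 then weight x <= d./2 - s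
   else if k < s then weight x == d./2 - s + k
   else d./2 <= weight x).

Definition alpha (s : nat) : seq bool := nseq s false.
Definition omega (s : nat) : seq bool := nseq s true.

(* B_eps \subseteq I^{d-s}, with I^{d-s} = I^{d-2s+1} x I^{s-1} *)
Definition in_B (d s : nat) (eps : seq bool) (x : seq bool) : Prop :=
  if eps == alpha s then in_X d s 0 x
  else if eps == omega s then in_X d s s x
  else in_X d s (weight eps) x /\ in_A eps (drop (d - 2 * s + 1) x).

Definition in_C (d s : nat) (eps : seq bool) (u : jstring) : Prop :=
  exists (x : seq bool) (y : jstring),
    [/\ u = map Some x ++ y, in_B d s eps x & in_starpow eps y].

Definition union_C (d s : nat) (u : jstring) : Prop :=
  exists eps : seq bool, size eps = s /\ in_C d s eps u.

(* Main.v *)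
Require Import Defs.
From mathcomp Require Import all_boot.
From mathcomp Require Import zify.

Definition ham (x x' : seq bool) := count (fun p : bool * bool => p.1 != p.2) (zip x x').
Definition both (x x' : seq bool) := count (fun p : bool * bool => p.1 && p.2) (zip x x').

Lemma L1 x x' : size x = size x' -> ham x x' <= weight x + weight x'.
Proof.
elim: x x' => [|a x IH] [|b x'] //= [/IH]; rewrite /ham /weight /= => H.
by case: a; case: b => /=; lia.
Qed.

Lemma L2 x x' : size x = size x' -> ham x x' + weight x + weight x' <= 2 * size x.
Proof.
elim: x x' => [|a x IH] [|b x'] //= [/IH]; rewrite /ham /weight /= => H.
by case: a; case: b => /=; lia.
Qed.

Lemma L3 x x' : size x = size x' -> ham x x' + both x x' <= size x.
Proof.
elim: x x' => [|a x IH] [|b x'] //= [/IH]; rewrite /ham /both /= => H.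
by case: a; case: b => /=; lia.
Qed.

Lemma both_l x x' : both x x' <= weight x.
Proof.
elim: x x' => [|a x IH] [|b x'] //=; rewrite /both /weight /=.
have := IH x'; rewrite /both /weight => H.
by case: a; case: b => /=; lia.
Qed.

Lemma both_r x x' : both x x' <= weight x'.
Proof.
elim: x x' => [|a x IH] [|b x'] //=; rewrite /both /weight /=.
have := IH x'; rewrite /both /weight => H.
by case: a; case: b => /=; lia.
Qed.

Lemma ham_sym x x' : ham x x' = ham x' x.
Proof.
elim: x x' => [|a x IH] [|b x'] //=; rewrite /ham /=.
have := IH x'; rewrite /ham => ->. by case: a; case: b.
Qed.

Lemma both_sym x x' : both x x' = both x' x.
Proof.
elim: x x' => [|a x IH] [|b x'] //=; rewrite /both /=.
have := IH x'; rewrite /both => ->. by case: a; case: b.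
Qed.

Lemma ham_le x x' : ham x x' <= size x.
Proof. by rewrite /ham (leq_trans (count_size _ _)) // size_zip geq_minl. Qed.

Lemma ham_cat a b a' b' : size a = size a' -> ham (a ++ b) (a' ++ b') = ham a a' + ham b b'.
Proof. by move=> h; rewrite /ham zip_cat // count_cat. Qed.

Lemma both_cat a b a' b' : size a = size a' -> both (a ++ b) (a' ++ b') = both a a' + both b b'.
Proof. by move=> h; rewrite /both zip_cat // count_cat. Qed.

Lemma weight_cat a b : weight (a ++ b) = weight a + weight b.
Proof. by rewrite /weight count_cat. Qed.

Lemma both_true y : both (nseq (size y) true) y = weight y.
Proof. by elim: y => //= b y; rewrite /both /weight /= => ->. Qed.

Lemma both_false n y : both (nseq n false) y = 0.
Proof. elim: n y => [|n IH] [|b y] //=; rewrite /both /=; by have := IH y; rewrite /both => ->. Qed.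

Lemma weight_nseq n b : weight (nseq n b) = b * n.
Proof. by rewrite /weight count_nseq. Qed.

Lemma w0 e : weight e = 0 -> e = nseq (size e) false.
Proof. elim: e => [|[] e IH] //=; rewrite /weight /= => H; by rewrite {1}IH. Qed.

Lemma ws e : weight e = size e -> e = nseq (size e) true.
Proof.
elim: e => [|[] e IH] //=; rewrite /weight /=.
  by move=> [] /IH {1}->.
by move=> H; have := count_size id e; lia.
Qed.

Definition cls d s h (e x : seq bool) : Prop :=
  [/\ size e = s, size x = d - s &
  ( weight e = 0
  \/ (weight e = s /\ h <= weight x)
  \/ (weight x = h - s + weight e /\ exists i c,
        [/\ 0 < i < s, take i (drop (d - 2 * s + 1) x) = take i e
          & drop i e = nseq (s - i) c]))].

Lemma cls_of d s e x : 0 < s -> 2 * s <= d -> size e = s -> in_B d s e x -> cls d s d./2 e x.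
Proof.
move=> s0 sd se; rewrite /in_B.
case: eqP => [->|ne1].
  by case=> sx _; split; rewrite ?size_nseq //; left; rewrite weight_nseq.
case: eqP => [->|ne2].
  case=> sx; rewrite (negbTE (lt0n_neq0 s0)) ltnn => hw.
  by split; rewrite ?size_nseq //; right; left; rewrite weight_nseq mul1n.
case=> [[sx hX] [sz [i [[/andP[i1 i2] hne hconst] hpre]]]].
have sz' : size (drop (d - 2 * s + 1) x) = s - 1 by rewrite size_drop sx; lia.
rewrite se in i2 hconst sz.
case: eqP hX => [/w0|_]; first by rewrite se => /ne1.
case: ltnP => hlt hX.
  split=> //; right; right; split; first by apply/eqP; rewrite hX; lia.
  exists i, (nth false e (s - 1)); split.
  - by rewrite i1.
  - apply: (@eq_from_nth _ false); first by rewrite !size_takel ?se ?sz'; lia.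
    move=> j; rewrite size_takel ?sz'; last lia.
    by move=> hj; rewrite !nth_take // hpre.
  - apply: (@eq_from_nth _ false); first by rewrite size_drop size_nseq se.
    move=> j; rewrite size_drop se => hj; rewrite nth_drop nth_nseq hj.
    rewrite hconst ?subn1 //; lia.
have := count_size id e; rewrite -/(weight e) se => hle.
have hw : weight e = size e by rewrite se; apply/eqP; rewrite eqn_leq hle.
by move/ws: hw; rewrite se => /ne2.
Qed.

Arguments cls_of {d s e x}.

Lemma mid_case d s h e x e' x' i c i' :
 d = 2 * h -> 0 < s -> 2 * s <= d -> size e = s -> size e' = s ->
 size x = d - s -> size x' = d - s ->
 weight x = h - s + weight e -> weight x' = h - s + weight e' ->
 0 < i < s -> take i (drop (d - 2 * s + 1) x) = take i e -> drop i e = nseq (s - i) c ->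
 i <= i' -> i' < s -> take i' (drop (d - 2 * s + 1) x') = take i' e' ->
 ham x x' + both e e' <= d - s.
Proof.
move=> dh s0 sd se se' sx sx' wx wx' /andP[i1 i2] hQ hc ii' i's hQ'.
have hQ2 : take i (drop (d - 2 * s + 1) x') = take i e'.
  by rewrite -(take_takel _ ii') hQ' take_takel.
set L := d - 2 * s + 1.
have eqx : x = take L x ++ (take i (drop L x) ++ drop i (drop L x)) by rewrite !cat_take_drop.
have eqx' : x' = take L x' ++ (take i (drop L x') ++ drop i (drop L x')) by rewrite !cat_take_drop.
have sP : size (take L x) = L by rewrite size_takel // sx /L; lia.
have sP' : size (take L x') = L by rewrite size_takel // sx' /L; lia.
have sS : size (drop i (drop L x)) = s - 1 - i by rewrite !size_drop sx /L; lia.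
have sS' : size (drop i (drop L x')) = s - 1 - i by rewrite !size_drop sx' /L; lia.
have sQ : size (take i e) = i by rewrite size_takel // se; lia.
have sQ' : size (take i e') = i by rewrite size_takel // se'; lia.
have hwx := wx; have hwx' := wx'.
rewrite eqx !weight_cat hQ in hwx; rewrite eqx' !weight_cat hQ2 in hwx'.
have hweq : weight e = weight (take i e) + weight (drop i e) by rewrite -weight_cat cat_take_drop.
have hweq' : weight e' = weight (take i e') + weight (drop i e') by rewrite -weight_cat cat_take_drop.
have hboth : both e e' = both (take i e) (take i e') + both (drop i e) (drop i e').
  by rewrite -both_cat ?sQ ?sQ' // !cat_take_drop.
have hham : ham x x' = ham (take L x) (take L x') + ham (take i e) (take i e')
                       + ham (drop i (drop L x)) (drop i (drop L x')).
  { rewrite {1}eqx {1}eqx' !ham_cat ?sP ?sP' ?size_cat //;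
    by rewrite /L ?hQ ?hQ2 ?sQ ?sQ' ?addnA. }
have h3 := L3 (take i e) (take i e') (etrans sQ (esym sQ')).
rewrite sQ in h3.
have sde' : size (drop i e') = s - i by rewrite size_drop se'.
have wde' := count_size id (drop i e'); rewrite -/(weight _) sde' in wde'.
rewrite hc in hweq hboth.
case: c hc hweq hboth => hc hweq hboth.
- rewrite -sde' both_true in hboth.
  rewrite weight_nseq mul1n in hweq.
  have hP := L2 _ _ (etrans sP (esym sP')).
  have hS := L2 _ _ (etrans sS (esym sS')).
  rewrite sP in hP; rewrite sS in hS.
  subst L; lia.
- rewrite both_false in hboth.
  rewrite weight_nseq mul0n in hweq.
  have hP := L1 _ _ (etrans sP (esym sP')).
  have hS := L1 _ _ (etrans sS (esym sS')).
  subst L; lia.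
Qed.

Arguments mid_case {d s h e x e' x' i c i'}.

Lemma core d s h e x e' x' : d = 2 * h -> 0 < s -> 2 * s <= d ->
  cls d s h e x -> cls d s h e' x' -> ham x x' + both e e' <= d - s.
Proof.
move=> dh s0 sd [se sx C] [se' sx' C'].
have hxx : size x = size x' by rewrite sx sx'.
have hl2 := L2 _ _ hxx. rewrite sx in hl2.
have b1 := both_l e e'. have b2 := both_r e e'.
have hle := ham_le x x'. rewrite sx in hle.
case: C => [w0|[[w1 wx]|[wx [i [c [/andP[i1 i2] hQ hc]]]]]].
- lia.
- case: C' => [w0'|[[w1' wx']|[wx' _]]]; lia.
case: C' => [w0'|[[w1' wx']|[wx' [i' [c' [/andP[i1' i2'] hQ' hc']]]]]].
- lia.
- lia.
case: (leqP i i') => hii.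
  by apply: (mid_case dh s0 sd se se' sx sx' wx wx' _ hQ hc hii i2' _); rewrite ?i1 ?i2 //.
rewrite ham_sym both_sym.
apply: (mid_case dh s0 sd se' se sx' sx wx' wx _ hQ' hc' (ltnW hii) i2 _);
  by rewrite ?i1' ?i2'.
Qed.

Arguments core {d s h e x e' x'}.

Lemma jdist_some x x' : jdist (map Some x) (map Some x') = ham x x'.
Proof.
elim: x x' => [|a x IH] [|b x'] //=; rewrite /jdist /ham /=.
by have := IH x'; rewrite /jdist /ham => ->.
Qed.

Lemma jdist_star e e' y y' : in_starpow e y -> in_starpow e' y' -> jdist y y' <= both e e'.
Proof.
elim: e e' y y' => [|a e IH] [|b e'] [|u y] [|v y'] //=; rewrite /in_starpow /=;
  try (by rewrite andbF); try (by move=> _ _; apply: leq0n).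
move=> /andP[ha hy] /andP[hb hy'].
have := IH e' y y' hy hy'; rewrite /jdist /both /= => H.
case: a ha; case: b hb; case: u; case: v => //=; try lia;
  move=> *; case: (_ != _); lia.
Qed.

Arguments jdist_star {e e' y y'}.

Theorem lemma5 (d s : nat) :
  0 < d -> ~~ odd d -> 0 < s -> 2 * s <= d ->
  neighborly (d - s) (union_C d s).
Proof.
move=> d0 ev s0 sd u v [e [se [x [y [-> Bx Sy]]]]] [e' [se' [x' [y' [-> Bx' Sy']]]]].
have dh : d = 2 * d./2.
  by have := odd_double_half d; rewrite (negbTE ev) add0n -mul2n.
have cx := cls_of s0 sd se Bx. have cx' := cls_of s0 sd se' Bx'.
have [_ sx _] := cx. have [_ sx' _] := cx'.
rewrite /jdist zip_cat ?size_map ?sx ?sx' // count_cat -/(jdist _ _) -/(jdist y y') jdist_some.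
have := core dh s0 sd cx cx'. have := jdist_star Sy Sy'. lia.
Qed.
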